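(* Let $(X,d)$ be a separable metric space with a computable structure $\mathcal I$ and let $T:X\to X$ be any map. If $I,J\in\mathcal I$, then $\mathcal E^I(x)=\mathcal E^J(x)$ for every $x\in X$.
   Context: $\Sigma=\{0,1\}^*$, $|s|$ the length of $s$; a universal Turing machine $\mathcal U$ is fixed and viewed as a partial recursive function $\Sigma\to\Sigma$. An interpretation function is $I:\Sigma\to X$ with dense image; it is computable if there is a total recursive $D:\Sigma\times\Sigma\times\mathbb N\to\mathbb Q$ with $|d(I(s_1),I(s_2))-D(s_1,s_2,n)|\le2^{-n}$; computable $I_1,I_2$ are equivalent if there is a total recursive $D^*$ with $|d(I_1(s_1),I_2(s_2))-D^*(s_1,s_2,n)|\le2^{-n}$; a computable structure is an equivalence class. Fix a total recursive surjection $\mathcal Q:\Sigma\to\Sigma^*$ onto the set $\Sigma^*$ of finite sequences of strings. For a program $p$ with $\mathcal U(p)$ defined, $U(p)=I(\mathcal Q(\mathcal U(p)))\in X^*$ ($I$ applied componentwise), with $i$-th entry $U_i(p)$, indexed from $0$. For $x\in X$, $n\in\mathbb N$, $\epsilon>0$: $\mathcal E^I(x,n,\epsilon)=\min\{|p|: U(p)\in X^{n+1},\ \max_{0\le i\le n}d(U_i(p),T^i(x))<\epsilon\}$. Hyperreals: $\mathbb R^*$ is an ordered field containing $\mathbb R$ with a surjective ring homomorphism $J:\mathbb R^{\mathbb N}\to\mathbb R^*$ such that if $a\in\mathbb R$ and $\exists k\ge1$ with $\phi_{kn}\ge a$ for all $n\ge1$ then $J(\phi)\ge a$; for nonzero $a,b$,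 $a\simeq b$ iff $a/b$, $b/a$ are bounded (absolutely less than some natural number); $[a]$ the class; $[a]\le[b]$ iff for all $x\in[a],y\in[b]$, $x\simeq y$ or $x<y$. $\mathcal R$ is the totally ordered set of $\approx$-classes of monotone sequences in $\mathbb R^*/{\simeq}$, where $(a_i)<(b_j)$ iff $\exists M$ with $a_n<b_m$ for all $n,m>M$ and $\approx$ means neither $<$ holds; $\mathbb R^*/{\simeq}$ embeds as constant sequences, and monotone sequences in $\mathcal R$ have sups and infs in $\mathcal R$. $\mathcal E^I(x,\epsilon)=[J((\mathcal E^I(x,n,\epsilon))_n)]$ (nonincreasing in $\epsilon$) and $\mathcal E^I(x)=\sup_{\epsilon>0}\mathcal E^I(x,\epsilon)\in\mathcal R$ (equivalently the sup along $\epsilon=1/k$). *)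

(* Defs.v *)
From HB Require Import structures.
From mathcomp Require Import all_boot all_order all_algebra.
From mathcomp Require Import boolp reals.
Set Implicit Arguments.
Unset Strict Implicit.
Unset Printing Implicit Defensive.
Import Order.TTheory GRing.Theory Num.Theory.
Local Open Scope ring_scope.

Inductive PR : nat -> Type :=
| PRzero (n : nat) : PR n
| PRsucc : PR 1
| PRproj (n : nat) (i : 'I_n) : PR n
| PRcomp (n m : nat) : PR m -> PRs n m -> PR n
| PRrec (n : nat) : PR n -> PR n.+2 -> PR n.+1
| PRmu (n : nat) : PR n.+1 -> PR n
with PRs : nat -> nat -> Type :=
| PRnil (n : nat) : PRs n 0
| PRcons (n m : nat) : PR n -> PRs n m -> PRs n m.+1.

(* relational (big-step) semantics: [eval f v y] = "f(v) is defined and = y" *)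
Inductive eval : forall n, PR n -> seq nat -> nat -> Prop :=
| eval_zero n v : size v = n -> eval (PRzero n) v 0
| eval_succ x : eval PRsucc [:: x] x.+1
| eval_proj n (i : 'I_n) v : size v = n -> eval (PRproj i) v (nth 0%N v i)
| eval_comp n m (f : PR m) (gs : PRs n m) v w y :
    evals gs v w -> eval f w y -> eval (PRcomp f gs) v y
| eval_rec0 n (f : PR n) (g : PR n.+2) v y :
    eval f v y -> eval (PRrec f g) (0%N :: v) y
| eval_recS n (f : PR n) (g : PR n.+2) k v z y :
    eval (PRrec f g) (k :: v) z -> eval g (k :: z :: v) y ->
    eval (PRrec f g) (k.+1 :: v) y
| eval_mu n (f : PR n.+1) v k :
    eval f (k :: v) 0 ->
    (forall j, (j < k)%N -> exists z, (0 < z)%N /\ eval f (j :: v) z) ->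
    eval (PRmu f) v k
with evals : forall n m, PRs n m -> seq nat -> seq nat -> Prop :=
| evals_nil n v : size v = n -> evals (PRnil n) v [::]
| evals_cons n m (g : PR n) (gs : PRs n m) v y w :
    eval g v y -> evals gs v w -> evals (PRcons g gs) v (y :: w).

(* Sigma = {0,1}^* ; bijective base-2 coding of binary strings by nat *)
Fixpoint enc (s : seq bool) : nat :=
  match s with
  | [::] => 0%N
  | b :: s' => ((enc s').*2 + b).+1
  end.

Definition partial_rec (f : seq bool -> option (seq bool)) : Prop :=
  exists e : PR 1, forall p (y : nat),
    eval e [:: enc p] y <-> exists s, f p = Some s /\ y = enc s.

(* the fixed universal machine: partial recursive and universal in the
   (additively optimal) Kolmogorov sense *)
Definition universal (U : seq bool -> option (seq bool)) : Prop :=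
  partial_rec U /\
  forall f, partial_rec f -> exists c : nat, forall s y, f s = Some y ->
    exists p, U p = Some y /\ (size p <= size s + c)%N.

(* Q : Sigma -> Sigma^* total recursive surjection: length and entries
   are total recursive *)
Definition Q_ok (Q : seq bool -> seq (seq bool)) : Prop :=
  (exists e : PR 1, forall s, eval e [:: enc s] (size (Q s))) /\
  (exists e : PR 2, forall s i, eval e [:: enc s; i] (enc (nth [::] (Q s) i))) /\
  (forall t, exists s, Q s = t).

(* total recursive D : Sigma x Sigma x N -> Q (rationals coded by
   sign, numerator, denominator-1, each total recursive) *)
Definition total_rec_rat3 (D : seq bool -> seq bool -> nat -> rat) : Prop :=
  exists es en ed : PR 3, forall s1 s2 n, exists a b c : nat,
    let args := [:: enc s1; enc s2; n] in
    [/\ eval es args a, eval en args b, eval ed args c &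
        D s1 s2 n = (-1) ^+ a * b%:R / c.+1%:R].

Section Metric.
Variables (R : realType) (X : Type) (d : X -> X -> R).

Definition metric : Prop :=
  [/\ forall x y, 0 <= d x y,
      forall x y, d x y = 0 <-> x = y,
      forall x y, d x y = d y x &
      forall x y z, d x z <= d x y + d y z].

Definition separable : Prop :=
  exists c : nat -> X, forall x (e : R), 0 < e -> exists n, d (c n) x < e.

Definition dense_image (I : seq bool -> X) : Prop :=
  forall x (e : R), 0 < e -> exists s, d (I s) x < e.

Definition computable_interp (I : seq bool -> X) : Prop :=
  dense_image I /\
  exists D, total_rec_rat3 D /\ forall s1 s2 n,
    `|d (I s1) (I s2) - ratr (D s1 s2 n)| <= 2%:R ^- n.

Definition equiv_interp (I1 I2 : seq bool -> X) : Prop :=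
  exists D, total_rec_rat3 D /\ forall s1 s2 n,
    `|d (I1 s1) (I2 s2) - ratr (D s1 s2 n)| <= 2%:R ^- n.

(* a computable structure = an equivalence class of computable interpretations *)
Definition computable_structure (CS : (seq bool -> X) -> Prop) : Prop :=
  exists I0, computable_interp I0 /\
    forall I, CS I <-> (computable_interp I /\ equiv_interp I0 I).
End Metric.

Section Complexity.
Variables (R : realType) (X : Type) (d : X -> X -> R) (T : X -> X)
  (U : seq bool -> option (seq bool)) (Q : seq bool -> seq (seq bool))
  (I : seq bool -> X).

Definition good_prog (x : X) (n : nat) (eps : R) (p : seq bool) : Prop :=
  exists w, U p = Some w /\ size (Q w) = n.+1 /\
    forall i, (i <= n)%N -> d (I (nth [::] (Q w) i)) (iter i T x) < eps.

(* minimum length of such a program (0 by convention if there is none) *)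
Definition Enet (x : X) (n : nat) (eps : R) : nat :=
  match pselect (exists m, `[< exists p, size p = m /\ good_prog x n eps p >])
  with
  | left h => ex_minn h
  | right _ => 0%N
  end.
End Complexity.

Section Hyper.
Variables (R : realType) (Rs : realFieldType).

Definition hyperreals (iota : {rmorphism R -> Rs}) (J : (nat -> R) -> Rs) : Prop :=
  (forall a b, a <= b -> iota a <= iota b) /\
  [/\ forall f g, J (fun n => f n + g n) = J f + J g,
      forall f g, J (fun n => f n * g n) = J f * J g,
      J (fun _ => 1) = 1,
      forall y, exists f, J f = y &
      forall (a : R) f, (exists k, (0 < k)%N /\
           forall n, (0 < n)%N -> a <= f (k * n)%N) -> iota a <= J f].

Definition bounded (z : Rs) : Prop := exists N : nat, `|z| < N%:R.

Definition sim (a b : Rs) : Prop :=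
  [/\ a != 0, b != 0, bounded (a / b) & bounded (b / a)].

Definition cls_le (a b : Rs) : Prop :=
  forall x y, 0 < x -> 0 < y -> sim x a -> sim y b -> sim x y \/ x < y.

Definition cls_lt (a b : Rs) : Prop := cls_le a b /\ ~ sim a b.

(* monotone sequences in R*/~ (classes represented by positive elements) *)
Definition mono_seq (s : nat -> Rs) : Prop :=
  (forall n, 0 < s n) /\
  ((forall n, cls_le (s n) (s n.+1)) \/ (forall n, cls_le (s n.+1) (s n))).

Definition seq_lt (s t : nat -> Rs) : Prop :=
  exists M : nat, forall n m, (M < n)%N -> (M < m)%N -> cls_lt (s n) (t m).

Definition seq_approx (s t : nat -> Rs) : Prop := ~ seq_lt s t /\ ~ seq_lt t s.

(* order on the set calR of approx-classes of monotone sequences *)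
Definition calR_le (s t : nat -> Rs) : Prop := seq_lt s t \/ seq_approx s t.

Definition is_sup_calR (P : R -> Prop) (F : R -> nat -> Rs) (s : nat -> Rs) : Prop :=
  [/\ mono_seq s,
      forall i, P i -> calR_le (F i) s &
      forall t, mono_seq t -> (forall i, P i -> calR_le (F i) t) -> calR_le s t].
End Hyper.

(* E^I(x,eps) = [J((E^I(x,n,eps))_n)], embedded in calR as a constant sequence *)
Definition Ecls (R : realType) (Rs : realFieldType) (J : (nat -> R) -> Rs)
  (X : Type) (d : X -> X -> R) (T : X -> X) (U : seq bool -> option (seq bool))
  (Q : seq bool -> seq (seq bool)) (I : seq bool -> X) (x : X) (eps : R) : nat -> Rs :=
  fun _ => J (fun n => (Enet d T U Q I x n eps)%:R).

(* Main.v *)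
Require Import Defs.
From HB Require Import structures.
From mathcomp Require Import all_boot all_order all_algebra.
From mathcomp Require Import boolp reals.
From Stdlib Require Import Program.Equality.
From mathcomp Require Import zify ring lra.
Import Order.TTheory GRing.Theory Num.Theory.

Module MP1.

Lemma enc_inj : injective enc.
Proof.
elim=> [|b s IH] [|b' s'] //= [] h.
have hb : b = b'.
  have := congr1 odd h; rewrite !oddD !odd_double /=.
  by case: b h; case: b'.
subst b'; congr (_ :: _); apply: IH.
have : (enc s).*2 = (enc s').*2 by lia.
by move/double_inj.
Qed.

Lemma enc_surj n : exists s, enc s = n.
Proof.
elim: n {-2}n (leqnn n) => [|n IH] m hm.
  by exists [::]; move: hm; rewrite leqn0 => /eqP ->.
case: m hm => [|m] hm; first by exists [::].
have [s hs] := IH m./2 ltac:(lia).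
exists (odd m :: s) => /=; rewrite hs.
by rewrite -[in RHS](odd_double_half m) addnC.
Qed.

Lemma enc_surj' n : exists s, enc s == n.
Proof. by have [s hs] := enc_surj n; exists s; apply/eqP. Qed.
Definition dec n : seq bool := xchoose (enc_surj' n).
Lemma decK n : enc (dec n) = n.
Proof. exact/eqP/(xchooseP (enc_surj' n)). Qed.
Lemma encK s : dec (enc s) = s.
Proof. by apply: enc_inj; rewrite decK. Qed.

Scheme PR_ind2 := Induction for PR Sort Prop
with PRs_ind2 := Induction for PRs Sort Prop.

Lemma eval_det :
  forall n (e : PR n), forall v y1 y2, eval e v y1 -> eval e v y2 -> y1 = y2.
Proof.
- apply: (PR_ind2 (fun n e => forall v y1 y2, eval e v y1 -> eval e v y2 -> y1 = y2)
    (fun n m gs => forall v w1 w2, evals gs v w1 -> evals gs v w2 -> w1 = w2)).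
  + move=> n v y1 y2 H1 H2; dependent destruction H1; dependent destruction H2; done.
  + move=> v y1 y2 H1 H2; dependent destruction H1; dependent destruction H2; done.
  + move=> n i v y1 y2 H1 H2; dependent destruction H1; dependent destruction H2; done.
  + move=> n m f IHf gs IHgs v y1 y2 H1 H2; dependent destruction H1;
      dependent destruction H2.
    have ? := IHgs _ _ _ H H0; subst. exact: IHf _ _ _ H1 H2.
  + move=> n f IHf g IHg v y1 y2 H1 H2.
    have key : forall k v y1 y2, eval (PRrec f g) (k :: v) y1 ->
        eval (PRrec f g) (k :: v) y2 -> y1 = y2.
      elim=> [|k IHk] w z1 z2 G1 G2; dependent destruction G1;
        dependent destruction G2.
      - exact: IHf _ _ _ G1 G2.
      - have ? := IHk _ _ _ G1_1 G2_1; subst.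
        exact: IHg _ _ _ G1_2 G2_2.
    case: v H1 H2 => [|k w] H1 H2; first by dependent destruction H1.
    exact: key _ _ _ _ H1 H2.
  + move=> n f IHf v y1 y2 H1 H2; dependent destruction H1; dependent destruction H2.
    case: (ltngtP k k0) => // hk.
    * have [z [hz hz']] := H0 _ hk.
      by have := IHf _ _ _ H1 hz'; move=> ?; subst.
    * have [z [hz hz']] := H _ hk.
      by have := IHf _ _ _ H2 hz'; move=> ?; subst.
  + move=> n v w1 w2 H1 H2; dependent destruction H1; dependent destruction H2; done.
  + move=> n m g IHg gs IHgs v w1 w2 H1 H2; dependent destruction H1;
      dependent destruction H2.
    by rewrite (IHg _ _ _ H H0) (IHgs _ _ _ H1 H2).
Qed.

Set Implicit Arguments.
Unset Strict Implicit.
Unset Printing Implicit Defensive.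

Definition compP n (e : PR n) (F : seq nat -> nat) :=
  forall v, size v = n -> eval e v (F v).

Definition pj n i : PR n.+1 := PRproj (inord i).
Lemma comp_pj n i : i <= n -> compP (pj n i) (fun v => nth 0 v i).
Proof.
move=> hi v hv; have := eval_proj (inord i : 'I_n.+1) hv.
by rewrite inordK.
Qed.

Definition c1 n (f : PR 1) (g : PR n) : PR n := PRcomp f (PRcons g (PRnil n)).
Definition c2 n (f : PR 2) (g h : PR n) : PR n :=
  PRcomp f (PRcons g (PRcons h (PRnil n))).
Definition c3 n (f : PR 3) (g h k : PR n) : PR n :=
  PRcomp f (PRcons g (PRcons h (PRcons k (PRnil n)))).

Lemma comp_c1 n f F (g : PR n) G : compP f F -> compP g G ->
  compP (c1 f g) (fun v => F [:: G v]).
Proof.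
move=> hf hg v hv; apply: eval_comp; last exact: hf.
by apply: evals_cons; [exact: hg|exact: evals_nil].
Qed.

Lemma comp_c2 n f F (g h : PR n) G H : compP f F -> compP g G -> compP h H ->
  compP (c2 f g h) (fun v => F [:: G v; H v]).
Proof.
move=> hf hg hh v hv; apply: eval_comp; last exact: hf.
apply: evals_cons; first exact: hg.
apply: evals_cons; first exact: hh.
exact: evals_nil.
Qed.

Lemma comp_c3 n f F (g h k : PR n) G H K : compP f F -> compP g G -> compP h H ->
  compP k K -> compP (c3 f g h k) (fun v => F [:: G v; H v; K v]).
Proof.
move=> hf hg hh hk v hv; apply: eval_comp; last exact: hf.
apply: evals_cons; first exact: hg.
apply: evals_cons; first exact: hh.
apply: evals_cons; first exact: hk.
exact: evals_nil.
Qed.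

Fixpoint cst n c : PR n :=
  match c with 0 => PRzero n | c'.+1 => c1 PRsucc (cst n c') end.
Lemma comp_cst n c : compP (cst n c) (fun _ => c).
Proof.
elim: c => [|c IH] v hv /=; first exact: eval_zero.
have hs : compP PRsucc (fun v => (nth 0 v 0).+1).
  by move=> [|x [|]] //= _; exact: eval_succ.
exact: (comp_c1 hs IH hv).
Qed.

Lemma comp_succ : compP PRsucc (fun v => (nth 0 v 0).+1).
Proof. by move=> [|x [|]] //= _; exact: eval_succ. Qed.

Fixpoint recf (F : seq nat -> nat) (G : seq nat -> nat) k v :=
  match k with 0 => F v | k'.+1 => G (k' :: recf F G k' v :: v) end.

Lemma comp_rec n (f : PR n) (g : PR n.+2) F G : compP f F -> compP g G ->
  compP (PRrec f g) (fun v => recf F G (head 0 v) (behead v)).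
Proof.
move=> hf hg [|k v] //= [hv].
elim: k => [|k IH] /=; first by apply: eval_rec0; exact: hf.
by apply: eval_recS; [exact: IH| apply: hg => /=; rewrite hv].
Qed.

Definition muF (P : nat -> nat) : nat :=
  match pselect (exists k, P k == 0) with
  | left h => ex_minn h | right _ => 0 end.

Lemma muF_spec P : (exists k, P k = 0) ->
  P (muF P) = 0 /\ forall j, j < muF P -> P j <> 0.
Proof.
move=> [k hk]; rewrite /muF; case: pselect => [h|[]]; last by exists k; apply/eqP.
case: ex_minnP => m /eqP hm hmin; split => // j hj /eqP hj0.
by have := hmin _ hj0; rewrite leqNgt hj.
Qed.

Lemma comp_mu n (f : PR n.+1) F : compP f F ->
  (forall v, size v = n -> exists k, F (k :: v) = 0) ->
  compP (PRmu f) (fun v => muF (fun k => F (k :: v))).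
Proof.
move=> hf hex v hv; have [h0 hlt] := muF_spec (hex v hv).
apply: eval_mu; first by rewrite -h0; apply: hf => /=; rewrite hv.
move=> j hj; exists (F (j :: v)); split; last by apply: hf => /=; rewrite hv.
by rewrite lt0n; apply/eqP; exact: hlt.
Qed.

Definition addP : PR 2 := PRrec (pj 0 0) (c1 PRsucc (pj 2 1)).
Lemma comp_add : compP addP (fun v => nth 0 v 0 + nth 0 v 1).
Proof.
move=> v hv; have := comp_rec (comp_pj (n:=0) (i:=0) isT)
  (comp_c1 comp_succ (comp_pj (n:=2) (i:=1) isT)) hv.
case: v hv => [|x [|y [|]]] //= _.
suff -> : forall x, recf (fun v => nth 0 v 0) (fun v => (nth 0 v 1).+1) x [:: y] = x + y by [].
by elim=> //= k ->.
Qed.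

Definition mulP : PR 2 := PRrec (cst 1 0) (c2 addP (pj 2 1) (pj 2 2)).
Lemma comp_mul : compP mulP (fun v => nth 0 v 0 * nth 0 v 1).
Proof.
move=> v hv; have := comp_rec (@comp_cst 1 0)
  (comp_c2 comp_add (comp_pj (n:=2) (i:=1) isT) (comp_pj (n:=2) (i:=2) isT)) hv.
case: v hv => [|x [|y [|]]] //= _.
suff -> : forall x, recf (fun _ => 0) (fun v => nth 0 v 1 + nth 0 v 2) x [:: y] = x * y by [].
by elim=> //= k ->; rewrite mulSn addnC.
Qed.

Definition predP : PR 1 := PRrec (PRzero 0) (pj 1 0).
Lemma comp_pred : compP predP (fun v => (nth 0 v 0).-1).
Proof.
move=> v hv; have := comp_rec (n:=0) (fun w hw => eval_zero hw)
  (comp_pj (n:=1) (i:=0) isT) hv.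
by case: v hv => [|x [|]] //= _; case: x.
Qed.

(* subr [y; x] = x - y *)
Definition subrP : PR 2 := PRrec (pj 0 0) (c1 predP (pj 2 1)).
Definition subP : PR 2 := c2 subrP (pj 1 1) (pj 1 0).
Lemma comp_sub : compP subP (fun v => nth 0 v 0 - nth 0 v 1).
Proof.
have h1 : compP subrP (fun v => nth 0 v 1 - nth 0 v 0).
  move=> v hv; have := comp_rec (comp_pj (n:=0) (i:=0) isT)
    (comp_c1 comp_pred (comp_pj (n:=2) (i:=1) isT)) hv.
  case: v hv => [|y [|x [|]]] //= _.
  suff -> : forall y, recf (fun v => nth 0 v 0) (fun v => (nth 0 v 1).-1) y [:: x] = x - y by [].
  by elim=> [|k IHk] /=; rewrite ?subn0 ?IHk ?subnS.
move=> v hv; have := comp_c2 h1 (comp_pj (n:=1) (i:=1) isT) (comp_pj (n:=1) (i:=0) isT) hv.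
by case: v hv => [|x [|y [|]]].
Qed.

Definition distP : PR 2 := c2 addP subP (c2 subP (pj 1 1) (pj 1 0)).
Lemma comp_dist : compP distP (fun v => (nth 0 v 0 - nth 0 v 1) + (nth 0 v 1 - nth 0 v 0)).
Proof.
move=> v hv; have := comp_c2 comp_add comp_sub
  (comp_c2 comp_sub (comp_pj (n:=1) (i:=1) isT) (comp_pj (n:=1) (i:=0) isT)) hv.
by case: v hv => [|x [|y [|]]].
Qed.

End MP1.
Import MP1.

Module MP2.
Set Implicit Arguments.
Unset Strict Implicit.
Unset Printing Implicit Defensive.

Section Main.
Variables (eU eSz : PR 1) (eNth : PR 2) (en1 ed1 en2 ed2 : PR 3) (k0 q1 q2 : nat).
Variables (Sz : nat -> nat) (Nth : nat -> nat -> nat) (B1 C1 B2 C2 : nat -> nat -> nat -> nat).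
Hypothesis cSz : compP eSz (fun v => Sz (nth 0 v 0)).
Hypothesis cNth : compP eNth (fun v => Nth (nth 0 v 0) (nth 0 v 1)).
Hypothesis cB1 : compP en1 (fun v => B1 (nth 0 v 0) (nth 0 v 1) (nth 0 v 2)).
Hypothesis cC1 : compP ed1 (fun v => C1 (nth 0 v 0) (nth 0 v 1) (nth 0 v 2)).
Hypothesis cB2 : compP en2 (fun v => B2 (nth 0 v 0) (nth 0 v 1) (nth 0 v 2)).
Hypothesis cC2 : compP ed2 (fun v => C2 (nth 0 v 0) (nth 0 v 1) (nth 0 v 2)).

Definition tstP (en ed : PR 3) (a b : PR 2) : PR 2 :=
  c2 subP (c1 PRsucc (c2 mulP (c3 en a b (cst 2 k0)) (cst 2 q2)))
          (c2 mulP (cst 2 q1) (c1 PRsucc (c3 ed a b (cst 2 k0)))).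

Definition tstF (B C : nat -> nat -> nat -> nat) x y :=
  (B x y k0 * q2).+1 - q1 * (C x y k0).+1.

Lemma comp_tst en ed B C (a b : PR 2) A Bf :
  compP en (fun v => B (nth 0 v 0) (nth 0 v 1) (nth 0 v 2)) ->
  compP ed (fun v => C (nth 0 v 0) (nth 0 v 1) (nth 0 v 2)) ->
  compP a A -> compP b Bf ->
  compP (tstP en ed a b) (fun v => tstF B C (A v) (Bf v)).
Proof.
move=> hB hC hA hb v hv.
exact: (comp_c2 comp_sub (comp_c1 comp_succ (comp_c2 comp_mul
  (comp_c3 hB hA hb (@comp_cst _ _)) (@comp_cst _ _)))
  (comp_c2 comp_mul (@comp_cst _ _) (comp_c1 comp_succ (comp_c3 hC hA hb (@comp_cst _ _)))) hv).
Qed.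

Definition tst1 t s := tstF B1 C1 t s.
Definition tst2 s' t := tstF B2 C2 t s'.
Definition Tf s := muF (fun t => tst1 t s).
Definition Gf s := muF (fun s' => tst2 s' (Tf s)).

Hypothesis ex1 : forall s, exists t, tst1 t s = 0.
Hypothesis ex2 : forall t, exists s', tst2 s' t = 0.

Definition TP : PR 1 := PRmu (tstP en1 ed1 (pj 1 0) (pj 1 1)).
Lemma comp_T : compP TP (fun v => Tf (nth 0 v 0)).
Proof.
move=> v hv.
have h := comp_tst cB1 cC1 (comp_pj (n:=1) (i:=0) isT) (comp_pj (n:=1) (i:=1) isT).
have := comp_mu h _ hv; case: v hv => [|s [|]] //= _; apply.
by move=> [|s' [|]] //= _; exact: ex1.
Qed.

Definition GP : PR 1 := PRmu (tstP en2 ed2 (c1 TP (pj 1 1)) (pj 1 0)).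
Lemma comp_G : compP GP (fun v => Gf (nth 0 v 0)).
Proof.
move=> v hv.
have h := comp_tst cB2 cC2 (comp_c1 comp_T (comp_pj (n:=1) (i:=1) isT))
  (comp_pj (n:=1) (i:=0) isT).
have := comp_mu h _ hv; case: v hv => [|s [|]] //= _; apply.
by move=> [|s' [|]] //= _; exact: ex2.
Qed.

Definition dist a b := (a - b) + (b - a).
Lemma dist0 a b : dist a b = 0 -> a = b.
Proof. rewrite /dist; lia. Qed.

Definition term i k W := dist (Nth k i) (Gf (Nth W i)).
Fixpoint Ssum m k W := match m with 0 => 0 | m'.+1 => Ssum m' k W + term m' k W end.
Definition Phi k W := dist (Sz k) (Sz W) + Ssum (Sz W) k W.
Definition Hf W := muF (fun k => Phi k W).

Hypothesis exPhi : forall W, exists k, Phi k W = 0.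

Definition termP : PR 3 :=
  c2 distP (c2 eNth (pj 2 1) (pj 2 0)) (c1 GP (c2 eNth (pj 2 2) (pj 2 0))).
Lemma comp_term : compP termP (fun v => term (nth 0 v 0) (nth 0 v 1) (nth 0 v 2)).
Proof.
move=> v hv.
have := comp_c2 comp_dist (comp_c2 cNth (comp_pj (n:=2) (i:=1) isT) (comp_pj (n:=2) (i:=0) isT))
  (comp_c1 comp_G (comp_c2 cNth (comp_pj (n:=2) (i:=2) isT) (comp_pj (n:=2) (i:=0) isT))) hv.
by case: v hv => [|i [|k [|W [|]]]].
Qed.

Definition SP : PR 3 := PRrec (cst 2 0) (c2 addP (pj 3 1) (c3 termP (pj 3 0) (pj 3 2) (pj 3 3))).
Lemma comp_S : compP SP (fun v => Ssum (nth 0 v 0) (nth 0 v 1) (nth 0 v 2)).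
Proof.
move=> v hv.
have := comp_rec (@comp_cst 2 0) (comp_c2 comp_add (comp_pj (n:=3) (i:=1) isT)
  (comp_c3 comp_term (comp_pj (n:=3) (i:=0) isT) (comp_pj (n:=3) (i:=2) isT)
     (comp_pj (n:=3) (i:=3) isT))) hv.
case: v hv => [|m [|k [|W [|]]]] //= _.
suff -> : forall m, recf (fun=> 0) (fun v => nth 0 v 1 + term (nth 0 v 0) (nth 0 v 2) (nth 0 v 3)) m [:: k; W] = Ssum m k W by [].
by elim=> //= m' ->.
Qed.

Definition PhiP : PR 2 :=
  c2 addP (c2 distP (c1 eSz (pj 1 0)) (c1 eSz (pj 1 1)))
          (c3 SP (c1 eSz (pj 1 1)) (pj 1 0) (pj 1 1)).
Lemma comp_Phi : compP PhiP (fun v => Phi (nth 0 v 0) (nth 0 v 1)).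
Proof.
move=> v hv.
have := comp_c2 comp_add (comp_c2 comp_dist (comp_c1 cSz (comp_pj (n:=1) (i:=0) isT))
  (comp_c1 cSz (comp_pj (n:=1) (i:=1) isT)))
  (comp_c3 comp_S (comp_c1 cSz (comp_pj (n:=1) (i:=1) isT)) (comp_pj (n:=1) (i:=0) isT)
     (comp_pj (n:=1) (i:=1) isT)) hv.
by case: v hv => [|k [|W [|]]].
Qed.

Definition HP : PR 1 := PRmu PhiP.
Lemma comp_H : compP HP (fun v => Hf (nth 0 v 0)).
Proof.
move=> v hv; have := comp_mu comp_Phi _ hv.
case: v hv => [|W [|]] //= _; apply.
by move=> [|w [|]] //= _; exact: exPhi.
Qed.

Definition EP : PR 1 := c1 HP eU.
Lemma EP_spec p y : eval EP [:: p] y <-> exists w, eval eU [:: p] w /\ y = Hf w.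
Proof.
split.
- rewrite /EP /c1 => h; dependent destruction h.
  match goal with HH : evals _ _ _ |- _ => rename HH into hE end.
  dependent destruction hE.
  match goal with HH : evals (PRnil _) _ _ |- _ => rename HH into hN end.
  dependent destruction hN.
  exists y0; split => //.
  exact: (eval_det _ _ _ _ _ h (comp_H (v := [:: y0]) erefl)).
- move=> [w [hw ->]]; apply: eval_comp; last exact: (comp_H (v := [:: w])).
  apply: evals_cons => //; exact: evals_nil.
Qed.

Lemma Hf_spec W : Sz (Hf W) = Sz W /\
  forall i, i < Sz W -> Nth (Hf W) i = Gf (Nth W i).
Proof.
have [h0 _] := muF_spec (exPhi W); rewrite -/(Hf W) in h0.
move: h0; rewrite /Phi => h0.
have hd : dist (Sz (Hf W)) (Sz W) = 0 by lia.
have hs : Ssum (Sz W) (Hf W) W = 0 by lia.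
split; first exact: dist0.
move=> i; elim: (Sz W) hs => // m IH /= hm hi.
have : term m (Hf W) W = 0 by lia.
have : Ssum m (Hf W) W = 0 by lia.
rewrite ltnS leq_eqVlt in hi; case/orP: hi => [/eqP -> _|hi h1 _].
  by move/dist0.
exact: IH.
Qed.

Lemma Gf_spec s : tst1 (Tf s) s = 0 /\ tst2 (Gf s) (Tf s) = 0.
Proof.
split; first by have [] := muF_spec (ex1 s).
by have [] := muF_spec (ex2 (Tf s)).
Qed.

End Main.

End MP2.
Import MP2.

Module MP3.
Set Implicit Arguments.
Unset Strict Implicit.
Unset Printing Implicit Defensive.
Local Open Scope ring_scope.

Section Reals.
Variable R : realType.

Lemma ratr_frac a b c : ratr ((-1) ^+ a * b%:R / c.+1%:R : rat) = (-1) ^+ a * b%:R / c.+1%:R :> R.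
Proof. by rewrite fmorph_div rmorphM rmorphXn rmorphN1 !rmorph_nat. Qed.

Lemma nat_frac_lt (b c k : nat) :
  ((b%:R : R) / c.+1%:R < 2%:R * 2%:R ^- k) = (b * 2 ^ k < 2 * c.+1)%N.
Proof.
have hP : (0 : R) < 2%:R ^+ k by apply: exprn_gt0.
rewrite ltr_pdivrMr ?ltr0Sn // -(ltr_nat R) natrM natrM natrX.
rewrite mulrAC ltr_pdivlMr //.
Qed.

Lemma approx_lt (dd : R) a b c k :
  `|dd - (-1) ^+ a * b%:R / c.+1%:R| <= 2%:R ^- k ->
  (b * 2 ^ k < 2 * c.+1)%N -> dd < 3%:R * 2%:R ^- k.
Proof.
move=> h hb; rewrite -nat_frac_lt in hb.
set r := (-1) ^+ a * b%:R / c.+1%:R in h.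
have hr : `|r| = b%:R / c.+1%:R.
  by rewrite /r -mulrA normrM normr_sign mul1r normrM normfV !normr_nat.
have h1 : dd - r <= 2%:R ^- k := le_trans (ler_norm _) h.
have h2 : r <= `|r| := ler_norm _.
rewrite hr in h2.
move: h1 h2 hb; clear h hr; rewrite /r.
move: (2%:R ^- k) ((-1) ^+ a * b%:R / c.+1%:R) (b%:R / c.+1%:R) => e r' u.
lra.
Qed.

Lemma approx_gt (dd : R) a b c k :
  `|dd - (-1) ^+ a * b%:R / c.+1%:R| <= 2%:R ^- k ->
  0 <= dd -> dd < 2%:R ^- k -> (b * 2 ^ k < 2 * c.+1)%N.
Proof.
move=> h h0 hd; rewrite -nat_frac_lt.
set r := (-1) ^+ a * b%:R / c.+1%:R in h.
have hr : `|r| = b%:R / c.+1%:R.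
  by rewrite /r -mulrA normrM normr_sign mul1r normrM normfV !normr_nat.
rewrite -hr.
have h1 : `|r| <= `|dd| + `|dd - r|.
  rewrite {1}(_ : r = dd - (dd - r)); last by ring.
  exact: ler_normB.
rewrite (ger0_norm h0) in h1.
apply: (le_lt_trans h1); rewrite mulr_natl mulr2n.
exact: ltr_leD.
Qed.

Lemma exk (eps : R) : 0 < eps -> exists k : nat, 12%:R * 2%:R ^- k < eps.
Proof.
move=> he.
have h0 : 0 <= 12%:R / eps by apply: divr_ge0 => //; apply: ltW.
have hb := archi_boundP h0.
set n := Num.Def.archi_bound _ in hb.
exists n.
have hn : (n%:R : R) < 2%:R ^+ n by rewrite -natrX ltr_nat ltn_expl.
have hP : (0 : R) < 2%:R ^+ n by apply: exprn_gt0.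
rewrite ltr_pdivrMr //.
have := lt_trans hb hn; rewrite ltr_pdivrMr //.
by rewrite mulrC.
Qed.
End Reals.

Lemma tot3 (e : PR 3) : (forall s1 s2 n, exists b, eval e [:: enc s1; enc s2; n] b) ->
  exists F : nat -> nat -> nat -> nat, compP e (fun v => F (nth 0 v 0) (nth 0 v 1) (nth 0 v 2)).
Proof.
move=> h.
have h' : forall x y z, exists b, eval e [:: x; y; z] b.
  by move=> x y z; have [b hb] := h (dec x) (dec y) z; exists b; rewrite !decK in hb.
exists (fun x y z => proj1_sig (cid (h' x y z))).
move=> [|x [|y [|z [|]]]] //= _; exact: proj2_sig (cid (h' x y z)).
Qed.

Lemma rat3_rep D : total_rec_rat3 D -> exists (en ed : PR 3) (Bf Cf : nat -> nat -> nat -> nat),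
  [/\ compP en (fun v => Bf (nth 0 v 0) (nth 0 v 1) (nth 0 v 2)),
      compP ed (fun v => Cf (nth 0 v 0) (nth 0 v 1) (nth 0 v 2)) &
   forall s1 s2 n, exists a, D s1 s2 n =
     (-1) ^+ a * (Bf (enc s1) (enc s2) n)%:R / (Cf (enc s1) (enc s2) n).+1%:R].
Proof.
move=> [es [en [ed h]]].
have [Bf cB] : exists F : nat -> nat -> nat -> nat, compP en (fun v => F (nth 0 v 0) (nth 0 v 1) (nth 0 v 2)).
  by apply: tot3 => s1 s2 n; have [a [b [c [_ hb _ _]]]] := h s1 s2 n; exists b.
have [Cf cC] : exists F : nat -> nat -> nat -> nat, compP ed (fun v => F (nth 0 v 0) (nth 0 v 1) (nth 0 v 2)).
  by apply: tot3 => s1 s2 n; have [a [b [c [_ _ hc _]]]] := h s1 s2 n; exists c.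
exists en, ed, Bf, Cf; split => // s1 s2 n.
have [a [b [c [_ hb hc ->]]]] := h s1 s2 n.
exists a.
have -> := eval_det _ _ _ _ _ hb (cB [:: enc s1; enc s2; n] erefl).
by have -> := eval_det _ _ _ _ _ hc (cC [:: enc s1; enc s2; n] erefl).
Qed.

Section Transl.
Variables (R : realType) (X : Type) (d : X -> X -> R) (T : X -> X)
  (U : seq bool -> option (seq bool)) (Q : seq bool -> seq (seq bool)).
Hypothesis md : metric d.

Lemma dsym x y : d x y = d y x.
Proof. by case: md. Qed.
Lemma dtri x y z : d x z <= d x y + d y z.
Proof. by case: md. Qed.
Lemma dge0 x y : 0 <= d x y.
Proof. by case: md. Qed.

Lemma transl (A B I0 : seq bool -> X) (DA DB : seq bool -> seq bool -> nat -> rat) :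
  universal U -> Q_ok Q -> dense_image d I0 -> dense_image d B ->
  total_rec_rat3 DA -> (forall s1 s2 n, `|d (I0 s1) (A s2) - ratr (DA s1 s2 n)| <= 2%:R ^- n) ->
  total_rec_rat3 DB -> (forall s1 s2 n, `|d (I0 s1) (B s2) - ratr (DB s1 s2 n)| <= 2%:R ^- n) ->
  forall eps, 0 < eps -> exists c : nat, forall x n p, good_prog d T U Q A x n (eps / 2) p ->
     exists p', good_prog d T U Q B x n eps p' /\ (size p' <= size p + c)%N.
Proof.
move=> [[eU heU] univ] [[eSz hSz] [[eNth hNth] Qsurj]] dI0 dB rA hDA rB hDB eps he.
have [k0 hk0] := exk he.
have [en1 [ed1 [B1 [C1 [cB1 cC1 hA]]]]] := rat3_rep rA.
have [en2 [ed2 [B2 [C2 [cB2 cC2 hB]]]]] := rat3_rep rB.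
pose Sz n := size (Q (dec n)).
pose Nth n i := enc (nth [::] (Q (dec n)) i).
have cSz : compP eSz (fun v => Sz (nth 0 v 0)).
  by move=> [|a [|]] //= _; rewrite /Sz -{1}(decK a); exact: hSz.
have cNth : compP eNth (fun v => Nth (nth 0 v 0) (nth 0 v 1)).
  by move=> [|a [|i [|]]] //= _; rewrite /Nth -{1}(decK a); exact: hNth.
pose q2 := (2 ^ k0)%N.
have epos : (0 : R) < 2%:R ^- k0 by rewrite invr_gt0 exprn_gt0.
have h1le : forall t s, tst1 k0 2 q2 B1 C1 t s = 0 ->
    d (I0 (dec t)) (A (dec s)) < 3%:R * 2%:R ^- k0.
  move=> t s; rewrite /tst1 /tstF => h0.
  have [a ha] := hA (dec t) (dec s) k0; rewrite !decK in ha.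
  have := hDA (dec t) (dec s) k0; rewrite ha ratr_frac => hh.
  apply: (approx_lt hh); by move/eqP: h0; rewrite subn_eq0.
have h2le : forall s' t, tst2 k0 2 q2 B2 C2 s' t = 0 ->
    d (I0 (dec t)) (B (dec s')) < 3%:R * 2%:R ^- k0.
  move=> s' t; rewrite /tst2 /tstF => h0.
  have [a ha] := hB (dec t) (dec s') k0; rewrite !decK in ha.
  have := hDB (dec t) (dec s') k0; rewrite ha ratr_frac => hh.
  apply: (approx_lt hh); by move/eqP: h0; rewrite subn_eq0.
have ex1 : forall s, exists t, tst1 k0 2 q2 B1 C1 t s = 0.
  move=> s; have [t0 ht0] := dI0 (A (dec s)) _ epos.
  exists (enc t0); have [a ha] := hA t0 (dec s) k0; rewrite decK in ha.
  have := hDA t0 (dec s) k0; rewrite ha ratr_frac => hh.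
  have := approx_gt hh (dge0 _ _) ht0.
  by rewrite /tst1 /tstF => hlt; apply/eqP; rewrite subn_eq0.
have ex2 : forall t, exists s', tst2 k0 2 q2 B2 C2 s' t = 0.
  move=> t; have [s0 hs0] := dB (I0 (dec t)) _ epos.
  rewrite dsym in hs0.
  exists (enc s0); have [a ha] := hB (dec t) s0 k0; rewrite decK in ha.
  have := hDB (dec t) s0 k0; rewrite ha ratr_frac => hh.
  have := approx_gt hh (dge0 _ _) hs0.
  by rewrite /tst2 /tstF => hlt; apply/eqP; rewrite subn_eq0.
have Gsem : forall s, d (A (dec s)) (B (dec (Gf k0 2 q2 B1 C1 B2 C2 s))) < eps / 2.
  move=> s; have [g1 g2] := Gf_spec ex1 ex2 s.
  have e1 := h1le _ _ g1; have e2 := h2le _ _ g2.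
  have := dtri (A (dec s)) (I0 (dec (Tf k0 2 q2 B1 C1 s))) (B (dec (Gf k0 2 q2 B1 C1 B2 C2 s))).
  rewrite (dsym (A (dec s)) (I0 _)).
  move: e1 e2 hk0; set e := 2%:R ^- k0; set x1 := d _ _; set x2 := d _ _; set x3 := d _ _.
  lra.
have exPhi : forall W, exists k, Phi k0 2 q2 Sz Nth B1 C1 B2 C2 k W = 0.
  move=> W; pose L := mkseq (fun i => dec (Gf k0 2 q2 B1 C1 B2 C2 (Nth W i))) (Sz W).
  have [w' hw'] := Qsurj L; exists (enc w').
  have hs : Sz (enc w') = Sz W by rewrite /Sz encK hw' size_mkseq.
  rewrite /Phi hs /dist subnn add0n.
  suff : forall m, (m <= Sz W)%N -> Ssum k0 2 q2 Nth B1 C1 B2 C2 m (enc w') W = 0 by apply.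
  elim=> // m IH hm /=; rewrite IH ?(ltnW hm) // add0n /term.
  have -> : Nth (enc w') m = Gf k0 2 q2 B1 C1 B2 C2 (Nth W m).
    by rewrite /Nth encK hw' nth_mkseq // decK.
  by rewrite /dist subnn.
pose H := Hf k0 2 q2 Sz Nth B1 C1 B2 C2.
pose f := fun p => match U p with Some w => Some (dec (H (enc w))) | None => None end.
have pf : partial_rec f.
  exists (EP eU eSz eNth en1 ed1 en2 ed2 k0 2 q2) => p y.
  rewrite (EP_spec eU cSz cNth cB1 cC1 cB2 cC2 ex1 ex2 exPhi); split.
  - move=> [w [hw ->]]; have [s [hs ->]] := (heU p w).1 hw.
    by exists (dec (H (enc s))); rewrite /f hs decK.
  - move=> [s [hs ->]]; move: hs; rewrite /f; case hU: (U p) => [w|] // [<-].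
    exists (enc w); split; last by rewrite decK.
    by apply/heU; exists w.
have [c hc] := univ f pf.
exists c => x n p [w [hUp [hsz hd]]].
have [hS hN] := Hf_spec exPhi (enc w).
set w'' := dec (H (enc w)).
have hfp : f p = Some w'' by rewrite /f hUp.
have [p' [hUp' hsize]] := hc p w'' hfp.
exists p'; split => //; exists w''; split => //.
have szw : size (Q w'') = n.+1.
  by have := hS; rewrite /Sz encK hsz => <-.
split => // i hi.
have hi' : (i < Sz (enc w))%N by rewrite /Sz encK hsz.
have := hN i hi'; rewrite /Nth encK => hn.
have -> : nth [::] (Q w'') i = dec (Gf k0 2 q2 B1 C1 B2 C2 (enc (nth [::] (Q w) i))).
  by rewrite -hn encK.
have := Gsem (enc (nth [::] (Q w) i)); rewrite encK => hg.
have := hd i hi.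
have := dtri (B (dec (Gf k0 2 q2 B1 C1 B2 C2 (enc (nth [::] (Q w) i))))) (A (nth [::] (Q w) i)) (iter i T x).
rewrite dsym in hg.
move: hg; set x1 := d _ _; set x2 := d _ _; set x3 := d _ _.
lra.
Qed.
End Transl.

End MP3.
Import MP3.

Module MP4.
Set Implicit Arguments.
Unset Strict Implicit.
Unset Printing Implicit Defensive.
Local Open Scope ring_scope.

Section Cls.
Variable Rs : realFieldType.

Lemma bounded_lt (z : Rs) (N : nat) : 0 <= z -> bounded z -> exists N : nat, z < N%:R.
Proof. by move=> hz [M hM]; exists M; rewrite ger0_norm in hM. Qed.

Lemma sim_refl (a : Rs) : a != 0 -> sim a a.
Proof. by move=> ha; split => //; exists 2%N; rewrite divff // normr1 ltr1n. Qed.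

Lemma ndiv (x a : Rs) : 0 < x -> 0 < a -> `|x / a| = x / a.
Proof. by move=> hx ha; rewrite ger0_norm // divr_ge0 // ltW. Qed.

Lemma sim_bd (x a : Rs) : 0 < x -> 0 < a -> sim x a ->
  exists N1 N2 : nat, x < N1%:R * a /\ a < N2%:R * x.
Proof.
rewrite /sim /bounded => hx ha [_ _ [N1 h1] [N2 h2]].
rewrite ndiv // ltr_pdivrMr // in h1.
rewrite ndiv // ltr_pdivrMr // in h2.
by exists N1, N2.
Qed.

Lemma cls_lt_big (a b : Rs) : 0 < a -> 0 < b -> cls_lt a b -> forall N : nat, N%:R * a <= b.
Proof.
rewrite /cls_lt /cls_le => ha hb [hle hns] N.
have ha0 : a != 0 by rewrite gt_eqF.
have hb0 : b != 0 by rewrite gt_eqF.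
case: (hle a b ha hb (sim_refl ha0) (sim_refl hb0)) => [//|hab].
rewrite leNgt; apply/negP => hlt; apply: hns; rewrite /sim /bounded; split => //.
  exists 1%N; rewrite ndiv // ltr_pdivrMr //; lra.
exists N; rewrite ndiv // ltr_pdivrMr //; lra.
Qed.

Lemma big_cls_lt (a b : Rs) : 0 < a -> 0 < b -> (forall N : nat, N%:R * a <= b) -> cls_lt a b.
Proof.
rewrite /cls_lt /cls_le => ha hb hN; split.
- move=> x y hx hy hxa hyb; right.
  have [N1 [_ [h1 _]]] := sim_bd hx ha hxa.
  have [_ [N3 [_ h3]]] := sim_bd hy hb hyb.
  have := hN (N1 * N3)%N; rewrite natrM => h.
  have hN3 : (0 : Rs) <= N3%:R by [].
  have hN1 : (0 : Rs) <= N1%:R by [].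
  nra.
- rewrite /sim /bounded => -[_ _ _ [N h]].
  rewrite ndiv // ltr_pdivrMr // mulrC in h; have := hN N; lra.
Qed.

Lemma cls_le_of_le (a b : Rs) : 0 < a -> a <= b -> cls_le a b.
Proof.
move=> ha hab x y hx hy hxa hyb.
have hb : 0 < b by apply: lt_le_trans hab.
have [N1 [_ [h1 _]]] := sim_bd hx ha hxa.
have [_ [N3 [_ h3]]] := sim_bd hy hb hyb.
case: (ltP x y) => hxy; [by right|left].
rewrite /sim /bounded; split; rewrite ?gt_eqF //.
  exists (N1 * N3)%N; rewrite ndiv // ltr_pdivrMr // natrM.
  have hN1 : (0 : Rs) <= N1%:R by [].
  have hN3 : (0 : Rs) <= N3%:R by [].
  nra.
exists 2%N; rewrite ndiv // ltr_pdivrMr //; lra.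
Qed.

Lemma not_cls_lt (a b : Rs) (K : nat) : 0 < a -> 0 < b -> b <= K%:R * a -> ~ cls_lt a b.
Proof.
move=> ha hb hK hlt; have := cls_lt_big ha hb hlt K.+1.
rewrite -addn1 natrD; lra.
Qed.

Lemma supG (R : realType) (F : R -> Rs) (s : nat -> Rs) :
  (forall eps, 0 < eps -> 0 < F eps) -> mono_seq s ->
  (forall eps, 0 < eps -> forall M, exists n K, (M < n)%N /\ F eps <= K%:R * s n) ->
  (forall M, exists m eps K, [/\ (M < m)%N, 0 < eps & s m <= K%:R * F eps]) ->
  is_sup_calR (fun eps => 0 < eps) (fun eps _ => F eps) s.
Proof.
move=> hF hs ha hb; split => //.
- move=> eps he; rewrite /calR_le.
  case: (pselect (seq_lt (fun _ => F eps) s)) => [h|h]; [by left|right; split => //].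
  move=> [M hM]; have [n [K [hn hK]]] := ha eps he M.
  exact: (not_cls_lt (hs.1 n) (hF eps he) hK (hM n M.+1 hn (ltnSn M))).
- move=> t ht hup.
  case: (pselect (seq_lt s t)) => [h|h]; [by left|right; split => //].
  move=> [M hM].
  have [m [eps [K [hm he hK]]]] := hb M.
  have hFp := hF eps he.
  have hsm := hs.1 m.
  case: (hup eps he) => [[M1 hM1]|[_ hnlt]].
  + pose n := (maxn M M1).+1.
    have hn1 : (M1 < n)%N by rewrite /n ltnS leq_maxr.
    have hn : (M < n)%N by rewrite /n ltnS leq_maxl.
    have h1 := cls_lt_big hFp (ht.1 n) (hM1 n n hn1 hn1) K.+1.
    have h2 := cls_lt_big (ht.1 n) hsm (hM n m hn hm) 1.
    move: h1; rewrite -addn1 natrD => h1; rewrite mulrDl mul1r in h1; rewrite mul1r in h2; move: h1 h2 hK hFp; clearbody n; set u := K%:R * F eps; move: u (t n) (s m) (F eps) => u tn sm fe; lra.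
  + apply: hnlt; exists M => n m' hn _.
    have htn := ht.1 n.
    apply: (big_cls_lt htn hFp) => N.
    have h2 := cls_lt_big htn hsm (hM n m hn hm) (N * K).
    rewrite natrM in h2.
    have hK0 : (0 : Rs) < K%:R.
      rewrite ltr0n lt0n; apply/negP => /eqP hk; move: hK; rewrite hk mulr0n mul0r. lra.
    have hN : (0 : Rs) <= N%:R by [].
    nra.
Qed.
End Cls.

End MP4.
Import MP4.

Module MP5.
Set Implicit Arguments.
Unset Strict Implicit.
Unset Printing Implicit Defensive.
Local Open Scope ring_scope.

Section Fin.
Variables (R : realType) (X : Type) (d : X -> X -> R) (T : X -> X)
  (U : seq bool -> option (seq bool)) (Q : seq bool -> seq (seq bool)).
Hypothesis hU : universal U.
Hypothesis hQ : Q_ok Q.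

Lemma good_exists (I : seq bool -> X) : dense_image d I ->
  forall x n eps, 0 < eps -> exists p, good_prog d T U Q I x n eps p.
Proof.
move=> dI x n eps he.
pose g i := proj1_sig (cid (dI (iter i T x) eps he)).
have hg i : d (I (g i)) (iter i T x) < eps := proj2_sig (cid (dI (iter i T x) eps he)).
have [_ [_ Qsurj]] := hQ.
have [w hw] := Qsurj (mkseq g n.+1).
pose f := fun _ : seq bool => Some w.
have pf : partial_rec f.
  exists (cst 1 (enc w)) => p y; split.
  - move=> h; exists w; split => //.
    exact: eval_det _ _ _ _ _ h (@comp_cst 1 (enc w) [:: enc p] erefl).
  - by move=> [s [[<-] ->]]; exact: (@comp_cst 1 (enc w) [:: enc p] erefl).
have [c hc] := hU.2 f pf.
have [p [hp _]] := hc [::] w erefl.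
exists p, w; split => //; split; first by rewrite hw size_mkseq.
by move=> i hi; rewrite hw nth_mkseq.
Qed.

Lemma Enet_spec I x n eps : (exists p, good_prog d T U Q I x n eps p) ->
  (exists p, size p = Enet d T U Q I x n eps /\ good_prog d T U Q I x n eps p) /\
  (forall p, good_prog d T U Q I x n eps p -> (Enet d T U Q I x n eps <= size p)%N).
Proof.
move=> [p hp]; rewrite /Enet; case: pselect => [h|[]]; last first.
  by exists (size p); apply/asboolP; exists p.
case: ex_minnP => m /asboolP [p' [hs hg]] hmin; split; first by exists p'.
by move=> q hq; apply: hmin; apply/asboolP; exists q.
Qed.

Lemma good_mono I x n e1 e2 p : e1 <= e2 ->
  good_prog d T U Q I x n e1 p -> good_prog d T U Q I x n e2 p.
Proof.
move=> hle [w [h1 [h2 h3]]]; exists w; split => //; split => // i hi.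
exact: lt_le_trans (h3 i hi) hle.
Qed.

Lemma Enet_mono I x n e1 e2 : dense_image d I -> 0 < e1 -> e1 <= e2 ->
  (Enet d T U Q I x n e2 <= Enet d T U Q I x n e1)%N.
Proof.
move=> dI he hle.
have [[p [hs hp]] _] := Enet_spec (good_exists dI x n he).
have hp2 := good_mono hle hp.
have [_ hmin] := Enet_spec (ex_intro _ p hp2).
by rewrite -hs; apply: hmin.
Qed.

Lemma Enet_lb I x eps : dense_image d I -> 0 < eps ->
  exists k, (0 < k)%N /\ forall n, (0 < n)%N -> (1 <= Enet d T U Q I x (k * n) eps)%N.
Proof.
move=> dI he.
have E0 : forall m, Enet d T U Q I x m eps = 0%N ->
    exists w, U [::] = Some w /\ size (Q w) = m.+1.
  move=> m h0; have [[p [hs [w [h1 [h2 _]]]]] _] := Enet_spec (good_exists dI x m he).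
  rewrite h0 in hs; case: p hs h1 => // _ h1; by exists w.
case hU0 : (U [::]) => [w|].
- exists (size (Q w)).+1; split => // n hn; rewrite lt0n; apply/eqP => h.
  have [w' [h1 h2]] := E0 _ h; rewrite hU0 in h1; case: h1 => h1; subst w'.
  have : (size (Q w) < (size (Q w)).+1 * n)%N.
    by apply: (leq_trans (ltnSn _)); rewrite leq_pmulr.
  move: h2; move: (size (Q w)) => a; move: (a.+1 * n)%N => m; lia.
- exists 1%N; split => // n _; rewrite lt0n; apply/eqP => h.
  by have [w' [h1 _]] := E0 _ h; rewrite hU0 in h1.
Qed.

Variables (Rs : realFieldType) (iota : {rmorphism R -> Rs}) (J : (nat -> R) -> Rs).
Hypothesis hH : hyperreals iota J.

Lemma Jadd f g : J (fun n => f n + g n) = J f + J g.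
Proof. by case: hH => _ []. Qed.
Lemma J1 : J (fun _ => 1) = 1.
Proof. by case: hH => _ []. Qed.
Lemma Jk (a : R) f : (exists k, (0 < k)%N /\ forall n, (0 < n)%N -> a <= f (k * n)%N) ->
  iota a <= J f.
Proof. by case: hH => _ [] _ _ _ _; apply. Qed.

Lemma Jsub f g : J (fun n => f n - g n) = J f - J g.
Proof.
have h := Jadd g (fun n => f n - g n).
have e : (fun n => g n + (f n - g n)) = f by apply: funext => n; rewrite addrC subrK.
rewrite e in h.
by rewrite h [in RHS]addrC addKr.
Qed.

Lemma Jmono f g : (forall n, f n <= g n) -> J f <= J g.
Proof.
move=> h; rewrite -subr_ge0 -Jsub -(rmorph0 iota); apply: Jk.
by exists 1%N; split => // n _; rewrite subr_ge0.
Qed.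

Lemma J0 : J (fun _ => 0) = 0.
Proof.
have h := Jsub (fun _ => 1) (fun _ => 1); rewrite [RHS]subrr /= in h.
rewrite -h; congr J; apply: funext => n /=; by rewrite subrr.
Qed.

Lemma Jnat c : J (fun _ => c%:R) = c%:R.
Proof.
elim: c => [|c IH]; first exact: J0.
have -> : (fun _ : nat => (c.+1%:R : R)) = (fun n => (fun _ => c%:R) n + (fun _ => 1) n).
  by apply: funext => n; rewrite -natr1.
by rewrite Jadd IH J1 natr1.
Qed.

Lemma Jge1 f : (exists k, (0 < k)%N /\ forall n, (0 < n)%N -> 1 <= f (k * n)%N) -> 1 <= J f.
Proof. by move=> h; rewrite -(rmorph1 iota); apply: Jk. Qed.

Definition cE I x eps := J (fun n => (Enet d T U Q I x n eps)%:R).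

Lemma cE_ge1 I x eps : dense_image d I -> 0 < eps -> 1 <= cE I x eps.
Proof.
move=> dI he; apply: Jge1; have [k [hk h]] := Enet_lb x dI he.
by exists k; split => // n hn; rewrite ler1n; apply: h.
Qed.

Lemma cE_anti I x e1 e2 : dense_image d I -> 0 < e1 -> e1 <= e2 -> cE I x e2 <= cE I x e1.
Proof. by move=> dI he hle; apply: Jmono => n; rewrite ler_nat; apply: Enet_mono. Qed.

Hypothesis md : metric d.

Lemma cE_cross (A B I0 : seq bool -> X) (DA DB : seq bool -> seq bool -> nat -> rat) x :
  dense_image d I0 -> dense_image d A -> dense_image d B ->
  total_rec_rat3 DA -> (forall s1 s2 n, `|d (I0 s1) (A s2) - ratr (DA s1 s2 n)| <= 2%:R ^- n) ->
  total_rec_rat3 DB -> (forall s1 s2 n, `|d (I0 s1) (B s2) - ratr (DB s1 s2 n)| <= 2%:R ^- n) ->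
  forall eps, 0 < eps -> exists K : nat, cE B x eps <= K%:R * cE A x (eps / 2).
Proof.
move=> dI0 dA dB rA hDA rB hDB eps he.
have he2 : 0 < eps / 2 by rewrite divr_gt0.
have [c hc] := transl T md hU hQ dI0 dB rA hDA rB hDB he.
exists c.+1.
have hle : forall n, (Enet d T U Q B x n eps <= Enet d T U Q A x n (eps / 2) + c)%N.
  move=> n; have [[p [hs hp]] _] := Enet_spec (good_exists dA x n he2).
  have [p' [hp' hsz]] := hc x n p hp.
  have [_ hmin] := Enet_spec (ex_intro _ p' hp').
  by rewrite -hs; apply: leq_trans (hmin _ hp') hsz.
have h1 : cE B x eps <= cE A x (eps / 2) + c%:R.
  rewrite /cE -Jnat -Jadd; apply: Jmono => n; rewrite -natrD ler_nat; exact: hle.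
have h2 := cE_ge1 x dA he2.
have hc0 : (0 : R) <= c%:R by [].
apply: (le_trans h1).
have hc0' : (0 : Rs) <= c%:R by [].
have -> : (c.+1%:R : Rs) = c%:R + 1 by rewrite natr1.
nra.
Qed.

End Fin.

Lemma bign (R : realType) (e : R) : 0 < e -> forall M, exists n, (M < n)%N /\ n.+1%:R^-1 <= e.
Proof.
move=> he M.
have h0 : 0 <= e^-1 by rewrite invr_ge0 ltW.
have hb := archi_boundP h0.
set a := Num.Def.archi_bound _ in hb.
exists (maxn M.+1 a); split; first by rewrite leq_max leqnn.
have hpos : (0 : R) < (maxn M.+1 a).+1%:R by rewrite ltr0n.
rewrite -[e in _ <= e]invrK lef_pV2 ?posrE ?invr_gt0 //.
apply: ltW; apply: (lt_le_trans hb); rewrite ler_nat; apply: leq_trans (leqnSn _).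
exact: leq_maxr.
Qed.

End MP5.
Import MP5.

Local Open Scope ring_scope.

Theorem lemma29 (R : realType) (X : Type) (d : X -> X -> R) (T : X -> X)
  (U : seq bool -> option (seq bool)) (Q : seq bool -> seq (seq bool))
  (Rs : realFieldType) (iota : {rmorphism R -> Rs}) (J : (nat -> R) -> Rs)
  (CS : (seq bool -> X) -> Prop) (I J' : seq bool -> X) :
  metric d -> separable d -> universal U -> Q_ok Q -> hyperreals iota J ->
  computable_structure d CS -> CS I -> CS J' ->
  forall x : X, exists s : nat -> Rs,
    is_sup_calR (fun eps => 0 < eps) (Ecls J d T U Q I x) s /\
    is_sup_calR (fun eps => 0 < eps) (Ecls J d T U Q J' x) s.
Proof.
move=> md sep hU hQ hH [I0 [cI0 hCS]] HI HJ x.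
have [[dI _] [DA [rA hDA]]] := (hCS I).1 HI.
have [[dJ _] [DB [rB hDB]]] := (hCS J').1 HJ.
have [dI0 _] := cI0.
pose cI e := cE d T U Q J I x e.
pose s n := cI (n.+1%:R^-1).
have invpos n : (0 : R) < n.+1%:R^-1 by rewrite invr_gt0 ltr0n.
have Ipos e : 0 < e -> 0 < cI e.
  by move=> he; apply: lt_le_trans ltr01 (cE_ge1 T hU hQ hH x dI he).
have Jpos e : 0 < e -> 0 < cE d T U Q J J' x e.
  by move=> he; apply: lt_le_trans ltr01 (cE_ge1 T hU hQ hH x dJ he).
have ms : mono_seq s.
  split; first by move=> n; apply: Ipos.
  left => n; apply: cls_le_of_le; first exact: Ipos.
  apply: (cE_anti T hU hQ hH x dI (invpos n.+1)).
  by rewrite lef_pV2 ?posrE ?ltr0n // ler_nat.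
exists s; split.
- apply: (@supG _ _ cI) => //.
  + move=> eps he M; have [n [hn hle]] := bign he M; exists n, 1%N; split => //.
    by rewrite mul1r; exact: (cE_anti T hU hQ hH x dI (invpos n) hle).
  + move=> M; exists M.+1, (M.+2%:R^-1), 1%N; split => //; by rewrite mul1r.
- apply: (@supG _ _ (cE d T U Q J J' x)) => //.
  + move=> eps he M.
    have [K hK] := cE_cross T hU hQ hH md x dI0 dI dJ rA hDA rB hDB he.
    have he2 : 0 < eps / 2 by rewrite divr_gt0.
    have [n [hn hle]] := bign he2 M; exists n, K; split => //.
    apply: (le_trans hK); apply: ler_wpM2l => //.
    exact: (cE_anti T hU hQ hH x dI (invpos n) hle).
  + move=> M.
    have [K hK] := cE_cross T hU hQ hH md x dI0 dJ dI rB hDB rA hDA (invpos M.+1).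
    exists M.+1, (M.+2%:R^-1 / 2), K; split => //.
    by rewrite divr_gt0.
Qed.
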